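(* Let $\gamma$ be a cocycle. Then (i) $|\gamma^{dom}(\lambda)|\ge1$ for every $\lambda\in\Lambda$; (ii) $|\gamma^{dom}(\lambda\mu)|\le|\gamma^{dom}(\lambda)|\,|\gamma^{dom}(\mu)|$ for all $\lambda,\mu\in\Lambda$.
   Context: $L$ is a finite extension of $\mathbb{Q}_p$, $K$ a complete extension field of $\mathbb{Q}_p$ containing $L$ with absolute value $|\ |$; $|\ |_L$ normalized absolute value of $L$. $G$ is the $L$-points of an $L$-split connected reductive group, $T$ a maximal $L$-split torus, $P$ a Borel subgroup containing $T$, $W=N(T)/T$, $U_0$ a maximal compact subgroup special with respect to $T$, $\Lambda=T/(U_0\cap T)$ (written multiplicatively), $\lambda:T\to\Lambda$ the projection, $W$ acting on $\Lambda$ by conjugation (${}^w\lambda$). $T^{--}=\{t:|\alpha(t)|_L\ge1$ for all roots $\alpha$ positive for $P\}$, $\Lambda^{--}=\lambda(T^{--})$. A cocycle is $\gamma:W\times\Lambda\to K^\times$ with (a) $\gamma(w,\lambda\mu)=\gamma(w,\lambda)\gamma(w,\mu)$; (b) $\gamma(vw,\lambda)=\gamma(v,{}^w\lambda)\gamma(w,\lambda)$; (c) $|\gamma(w,\lambda)|\le1$ for $\lambda\in\Lambda^{--}$; (d) $\gamma(w,\lambda)=1$ if ${}^w\lambda=\lambda$. $\gamma^{dom}(\lambda):=\gamma(w,\lambda)$ for any $w\in W$ with ${}^w\lambda\in\Lambda^{--}$ (well defined by (d)). *)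

(* Defs.v *)
From HB Require Import structures.
From mathcomp Require Import all_boot all_order all_algebra all_fingroup.
Set Implicit Arguments. Unset Strict Implicit. Unset Printing Implicit Defensive.
Import Order.TTheory GRing.Theory Num.Theory.
Local Open Scope ring_scope.

(* W : finite group (the Weyl group N(T)/T), Lambda : abelian group
   T/(U_0 ∩ T), written ADDITIVELY here (the paper writes it
   multiplicatively: lambda*mu in the paper is  l + m  here).
   act w l  is  ^w lambda  (a left action by group automorphisms). *)
Definition is_Waction (W : finGroupType) (Lam : zmodType) (act : W -> Lam -> Lam) :=
  [/\ forall l, act 1%g l = l,
      forall (v w : W) l, act (v * w)%g l = act v (act w l)
    & forall w, {morph act w : x y / x + y}].

Definition is_fundamental_domain (W : finGroupType) (Lam : zmodType)
    (act : W -> Lam -> Lam) (dom : pred Lam) :=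
  (forall l, exists w, dom (act w l)) /\
  (forall l (v w : W), dom (act v l) -> dom (act w l) -> act v l = act w l).

Definition is_absval (K : fieldType) (R : realFieldType) (abs : K -> R) :=
  [/\ forall x, 0 <= abs x,
      forall x, abs x = 0 <-> x = 0,
      forall x y, abs (x * y) = abs x * abs y
    & forall x y, abs (x + y) <= Num.max (abs x) (abs y)].

Definition is_cocycle (W : finGroupType) (Lam : zmodType) (K : fieldType)
    (R : realFieldType) (act : W -> Lam -> Lam) (dom : pred Lam)
    (abs : K -> R) (gamma : W -> Lam -> K) :=
  [/\ forall w l, gamma w l != 0,
      forall w l m, gamma w (l + m) = gamma w l * gamma w m,
      forall (v w : W) l, gamma (v * w)%g l = gamma v (act w l) * gamma w l,
      forall w l, dom l -> abs (gamma w l) <= 1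
    & forall w l, act w l = l -> gamma w l = 1].

Definition gamma_dom (W : finGroupType) (Lam : zmodType) (K : fieldType)
    (act : W -> Lam -> Lam) (dom : pred Lam) (gamma : W -> Lam -> K) (l : Lam) : K :=
  match [pick w : W | dom (act w l)] with
  | Some w => gamma w l
  | None => 1
  end.

(* Main.v *)
Require Import Defs.
From HB Require Import structures.
From mathcomp Require Import all_boot all_order all_algebra all_fingroup.
Import Order.TTheory GRing.Theory Num.Theory.
Local Open Scope ring_scope.

Theorem lemma2p1 (W : finGroupType) (Lam : zmodType) (K : fieldType)
    (R : realFieldType) (act : W -> Lam -> Lam) (dom : pred Lam)
    (abs : K -> R) (gamma : W -> Lam -> K)
    (Hact : is_Waction act) (Hdom : is_fundamental_domain act dom)
    (Habs : is_absval abs) (Hgamma : is_cocycle act dom abs gamma) :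
  (forall l : Lam, 1 <= abs (gamma_dom act dom gamma l)) /\
  (forall l m : Lam, abs (gamma_dom act dom gamma (l + m))
                     <= abs (gamma_dom act dom gamma l) * abs (gamma_dom act dom gamma m)).
Proof.
case: Hact => act1 actM actD.
case: Hdom => dex _.
case: Habs => abs0 abseq absM _.
case: Hgamma => gnz gD gM gle gfix.
have key : forall w l, abs (gamma w l) <= abs (gamma_dom act dom gamma l).
  move=> w l; rewrite /gamma_dom.
  case: pickP => [v Hv|H]; last first.
    by case: (dex l) => v Hv; move: (H v); rewrite Hv.
  have -> : w = (w * v^-1 * v)%g by rewrite -mulgA mulVg mulg1.
  rewrite gM absM -[X in _ <= X]mul1r; apply: ler_wpM2r; first exact: abs0.
  exact: gle.
have g1 : forall l, gamma 1%g l = 1 by move=> l; apply: gfix; apply: act1.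
split.
  move=> l; have := key 1%g l; rewrite g1.
  have -> : abs 1 = 1.
    have h := absM 1 1; rewrite mulr1 in h.
    have hn : abs 1 != 0 by apply/eqP => /abseq /eqP; rewrite oner_eq0.
    by apply: (mulfI hn); rewrite -h mulr1.
  by [].
move=> l m; rewrite {1}/gamma_dom.
case: pickP => [w Hw|H].
  rewrite gD absM ler_pM //; try exact: abs0; exact: key.
case: (dex (l + m)) => v Hv; move: (H v); by rewrite Hv.
Qed.
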